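(* Let $|\psi\rangle$ be a state on $\mathbb{C}^R\otimes(\mathbb{C}^\kappa\otimes\mathbb{C}^R)\otimes\mathbb{C}^\kappa$ (registers 1,2,3,4; $A$ = register 1, $B$ = registers 2,3, $C$ = register 4) such that $\mathrm{Tr}_A(|\psi\rangle\langle\psi|)$ is separable across $B|C$. Suppose $\mathsf{Density}$ and $\mathsf{MatchCheck}$ succeed on $|\psi\rangle$ with probability $\frac1\kappa-d_{\mathsf D}$ and $1-d_{\mathsf M}$ respectively. Then there exists a state $|\chi\rangle$ that is rigid after applying $\mathrm{CNOT}_{1,3}\mathrm{CNOT}_{2,4}$ such that $$|\langle\chi|\psi\rangle|^2\ge 1-\kappa d_{\mathsf D}-(\kappa+1)\sqrt{(\kappa+1)d_{\mathsf M}}.$$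
   Context: $\mathrm{CNOT}_{i,j}$ maps $|x\rangle_i|y\rangle_j\mapsto|x\rangle_i|y\oplus x\rangle_j$ with addition modulo the register dimension. $\mathsf{MatchCheck}$ measures all registers in the computational basis, obtaining $(v,c,w,d)$, and accepts iff $(v,c)=(w,d)$. $\mathsf{Density}$ applies $\mathrm{CNOT}_{1,3}\mathrm{CNOT}_{2,4}$ and then measures the first two registers in the Hadamard basis, accepting iff they are in the uniform superposition state; equivalently it accepts with probability $|\langle +'|\psi\rangle|^2$ where $|+'\rangle=\mathrm{CNOT}_{1,3}\mathrm{CNOT}_{2,4}\big(\tfrac{1}{\sqrt{R\kappa}}\sum_{v\in[R],c\in[\kappa]}|v\rangle|c\rangle\big)|0\rangle|0\rangle$. A state is ''rigid after applying $\mathrm{CNOT}_{1,3}\mathrm{CNOT}_{2,4}$'' if it has the form $\frac1{\sqrt R}\sum_{v\in[R]}|v\rangle|c_v\rangle|v\rangle|c_v\rangle$ for some indices $c_v\in[\kappa]$. *)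

(* Defs.v *)
(* Amplitudes live in an arbitrary numeric closed field C
   (e.g. the complex numbers), with conjugation ^* and sqrtC. *)
From HB Require Import structures.
From mathcomp Require Import all_boot all_order all_algebra.
Set Implicit Arguments. Unset Strict Implicit. Unset Printing Implicit Defensive.
Import Order.TTheory GRing.Theory Num.Theory.
Local Open Scope ring_scope.

Section Q.
Variable C : numClosedFieldType.
Variables R k : nat.

(* basis labels (v,c,w,d) of registers 1,2,3,4 : C^R (x) C^k (x) C^R (x) C^k *)
Definition Reg := ('I_R * 'I_k * 'I_R * 'I_k)%type.
Definition vec := Reg -> C.

Definition addmod n (y x : 'I_n) : 'I_n :=
  Ordinal (ltn_pmod (y + x) (leq_ltn_trans (leq0n x) (ltn_ord x))).

Definition cnot13_basis (z : Reg) : Reg :=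
  let: (v, c, w, d) := z in (v, c, addmod w v, d).
Definition cnot24_basis (z : Reg) : Reg :=
  let: (v, c, w, d) := z in (v, c, w, addmod d c).

Definition push (f : Reg -> Reg) (phi : vec) : vec :=
  fun z => \sum_(b | f b == z) phi b.

Definition inner (a b : vec) : C := \sum_z (a z)^* * b z.

Definition is_state (phi : vec) : Prop := \sum_z `|phi z| ^+ 2 = 1.

Definition unif00 : vec := fun z =>
  let: (v, c, w, d) := z in
  (sqrtC (R * k)%:R)^-1 * (val w == 0%N)%:R * (val d == 0%N)%:R.

Definition plus' : vec := push cnot13_basis (push cnot24_basis unif00).

Definition probDensity (psi : vec) : C := `|inner plus' psi| ^+ 2.

Definition probMatchCheck (psi : vec) : C :=
  \sum_(z : Reg | (z.1.1.1 == z.1.2) && (z.1.1.2 == z.2)) `|psi z| ^+ 2.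

(* rigid after applying CNOT_{1,3} CNOT_{2,4} :
   (1/sqrt R) sum_v |v>|c_v>|v>|c_v> *)
Definition rigid (chi : vec) : Prop :=
  exists cv : 'I_R -> 'I_k,
    chi = fun z => \sum_(v : 'I_R) (sqrtC R%:R)^-1 * (z == (v, cv v, v, cv v))%:R.

Definition psd (T : finType) (M : T -> T -> C) : Prop :=
  forall x : T -> C, 0 <= \sum_i \sum_j (x i)^* * M i j * x j.
Definition density (T : finType) (M : T -> T -> C) : Prop :=
  psd M /\ \sum_i M i i = 1.

(* Tr_A |psi><psi|, on B = registers 2,3 and C = register 4 *)
Definition TB := ('I_k * 'I_R)%type.
Definition rhoBC (psi : vec) (x y : (TB * 'I_k)%type) : C :=
  \sum_(v : 'I_R) psi (v, x.1.1, x.1.2, x.2) * (psi (v, y.1.1, y.1.2, y.2))^*.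

Definition separableBC (rho : (TB * 'I_k)%type -> (TB * 'I_k)%type -> C) : Prop :=
  exists (n : nat) (p : 'I_n -> C) (sB : 'I_n -> TB -> TB -> C)
         (sC : 'I_n -> 'I_k -> 'I_k -> C),
    [/\ forall i, 0 <= p i, \sum_i p i = 1,
        forall i, density (sB i), forall i, density (sC i) &
        forall x y, rho x y = \sum_i p i * (sB i x.1 y.1 * sC i x.2 y.2)].
End Q.

(* Main.v *)
Require Import Defs.
From HB Require Import structures.
From mathcomp Require Import all_boot all_order all_algebra.
From mathcomp Require Import ring zify.
Import Order.TTheory GRing.Theory Num.Theory.
Local Open Scope ring_scope.
Section Psd.
Variable C : numClosedFieldType.
Variable T : finType.

Lemma sum2 (F : T -> C) x y : x != y ->
  (forall i, i != x -> i != y -> F i = 0) -> \sum_i F i = F x + F y.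
Proof.
move=> xy H; rewrite (bigD1 x) //= (bigD1 y) 1?eq_sym //= big1 ?addr0 //.
by move=> i /andP[iy ix]; apply: H.
Qed.

Lemma psd_form (M : T -> T -> C) x y (a b : C) : x != y -> psd M ->
  0 <= a^* * (M x x * a + M x y * b) + b^* * (M y x * a + M y y * b).
Proof.
move=> xy /(_ (fun i => if i == x then a else if i == y then b else 0)).
have yx : (y == x) = false by apply: negbTE; rewrite eq_sym.
rewrite (sum2 _ _ _ xy); last first.
  move=> i /negbTE ix /negbTE iy; rewrite ix iy conjC0 big1 // => j _; by rewrite !mul0r.
rewrite !(sum2 _ _ _ xy); try by move=> i /negbTE ix /negbTE iy; rewrite ix iy mulr0.
by rewrite eqxx yx eqxx !mulrDr !mulrA.
Qed.

Arguments psd_form [M x y] a b.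
Lemma psd_diag (M : T -> T -> C) x : psd M -> 0 <= M x x.
Proof.
move=> /(_ (fun i => (i == x)%:R)).
rewrite (eq_bigr (fun i => ((i == x)%:R)^* * M i x)); last first.
  move=> i _; rewrite (bigD1 x) //= eqxx mulr1 big1 ?addr0 // => j jx.
  by rewrite (negbTE jx) mulr0.
rewrite (bigD1 x) //= big1 ?addr0; last first.
  by move=> i ix; rewrite (negbTE ix) conjC0 mul0r.
by rewrite eqxx conjC1 mul1r.
Qed.

Arguments psd_diag [M] x.
Lemma psd_herm (M : T -> T -> C) x y : x != y -> psd M -> M y x = (M x y)^*.
Proof.
move=> xy hM.
have rA := ger0_real (psd_diag x hM); have rB := ger0_real (psd_diag y hM).
have h1 := ger0_real (psd_form 1 1 xy hM).
have h2 := ger0_real (psd_form 1 'i xy hM).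
rewrite conjC1 !mul1r !mulr1 in h1 h2.
rewrite conjCi in h2.
set A := M x x in rA h1 h2; set B := M y y in rB h1 h2; set s := M x y in h1 h2 *; set t := M y x in h1 h2 *.
have ii : 'i * 'i = -1 :> C by rewrite -expr2 sqrCi.
have e1 : (s + t)^* = s + t.
  apply/CrealP; have -> : s + t = (A + s + (t + B)) - A - B by ring.
  by rewrite !rpredB.
have e2 : ('i * (s - t))^* = 'i * (s - t).
  apply/CrealP; have -> : 'i * (s - t) = (A + s * 'i + - 'i * (t + B * 'i)) - A - B.
    transitivity (A + s * 'i - 'i * t - B * ('i * 'i) - A - B); last by ring.
    by rewrite ii; ring.
  by rewrite !rpredB.
rewrite rmorphM /= conjCi rmorphB /= in e2.
have e3 : s^* - t^* = t - s.
  apply: (mulfI (neq0Ci C)); apply: oppr_inj; rewrite -mulNr e2; ring.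
rewrite rmorphD /= in e1.
have two : (2%:R : C) != 0 by rewrite pnatr_eq0.
have -> : t = (s + t + (t - s)) / 2%:R by field.
by rewrite -e1 -e3; field.
Qed.

Arguments psd_herm [M x y].
Lemma psd_minor (M : T -> T -> C) x y : x != y -> psd M ->
  `|M x y| ^+ 2 <= M x x * M y y.
Proof.
move=> xy hM.
have hA := psd_diag x hM; have hB := psd_diag y hM.
have hh := psd_herm xy hM.
have f := psd_form _ _ xy hM; rewrite hh in f.
set A := M x x in hA f *; set B := M y y in hB f *; set s := M x y in f hh *.
rewrite normCK.
have [Bgt0|] := boolP (0 < B).
  have := f B (- s^*).
  rewrite (conj_Creal (ger0_real hB)) rmorphN /= conjCK.
  have -> : B * (A * B + s * - s^*) + - s * (s^* * B + B * - s^*) = B * (A * B - s * s^*) by ring.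
  by rewrite pmulr_rge0 // subr_ge0 mulrC.
rewrite lt_def hB andbT negbK => /eqP B0.
have [Agt0|] := boolP (0 < A).
  have := f (- s) A.
  rewrite (conj_Creal (ger0_real hA)) rmorphN /=.
  have -> : - s^* * (A * - s + s * A) + A * (s^* * - s + B * A) = A * (A * B - s * s^*) by ring.
  by rewrite pmulr_rge0 // subr_ge0 mulrC.
rewrite lt_def hA andbT negbK => /eqP A0.
have := f 1 (- s^*).
rewrite conjC1 rmorphN /= conjCK A0 B0 !mul0r !mul1r add0r addr0 mulr1.
have -> : s * - s^* + - s * s^* = - (s * s^*) *+ 2 by rewrite mulrN mulNr mulr2n.
by rewrite ?mul0r ?mulr0 pmulrn_lge0 // oppr_ge0.
Qed.
End Psd.
Section Ineq.
Variable C : numClosedFieldType.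

Lemma prod_bound (P Q a b c d : C) : 0 <= P -> 0 <= Q -> 0 <= a -> 0 <= b ->
  0 <= c -> 0 <= d -> P ^+ 2 <= a * b -> Q ^+ 2 <= c * d ->
  P * Q <= (a * d + b * c) / 2%:R.
Proof.
move=> P0 Q0 a0 b0 c0 d0 hP hQ.
have r0 : 0 <= (a * d + b * c) / 2%:R.
  by rewrite divr_ge0 ?ler0n // addr_ge0 // mulr_ge0.
rewrite -(ler_pXn2r (n := 2)) // ?nnegrE ?mulr_ge0 //.
apply: (le_trans (y := (a * d) * (b * c))).
  rewrite exprMn.
  have -> : a * d * (b * c) = (a * b) * (c * d) by ring.
  by apply: ler_pM; rewrite ?exprn_ge0.
apply: Order.le_of_leif; apply: real_leif_AGM2; apply: ger0_real; exact: mulr_ge0.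
Qed.

Lemma cs_sum (I : finType) (x : I -> C) : (forall i, x i \is Num.real) ->
  (\sum_i x i) ^+ 2 <= #|I|%:R * \sum_i x i ^+ 2.
Proof.
move=> xr.
have e : \sum_i \sum_j (x i - x j) ^+ 2 = (#|I|%:R * \sum_i x i ^+ 2 - (\sum_i x i) ^+ 2) *+ 2.
  have h1 : forall i, \sum_j (x i - x j) ^+ 2 = #|I|%:R * x i ^+ 2 - (x i * \sum_j x j) *+ 2 + \sum_j x j ^+ 2.
    move=> i; under eq_bigr do rewrite sqrrB.
    rewrite big_split /= sumrB sumr_const.
    congr (_ - _ + _); first by rewrite mulr_natl.
    by rewrite mulr_sumr sumrMnl.
  under eq_bigr do rewrite h1.
  rewrite big_split /= sumrB -mulr_sumr sumr_const.
  rewrite sumrMnl -mulr_suml -(mulr_natl (\sum_j _)) expr2; ring.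
rewrite -subr_ge0 -(pmulrn_lge0 _ (isT : (0 < 2)%N)) -e.
apply: sumr_ge0 => i _; apply: sumr_ge0 => j _.
by rewrite -realEsqr rpredB.
Qed.

Lemma exists_max (T : finType) (f : T -> C) (x0 : T) :
  (forall x, f x \is Num.real) -> exists m, forall x, f x <= f m.
Proof.
move=> fr.
suff H : forall s : seq T, exists m, forall x, x \in x0 :: s -> f x <= f m.
  have [m hm] := H (enum T); exists m => x; apply: hm.
  by rewrite inE mem_enum orbT.
elim=> [|y s [m hm]].
  by exists x0 => x; rewrite inE => /eqP ->.
have [le|lt] := real_leP (fr y) (fr m).
  exists m => x; rewrite !inE => /orP[/eqP->|/orP[/eqP->|xs]]; try done.
  - by apply: hm; rewrite inE eqxx.
  - by apply: hm; rewrite inE xs orbT.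
exists y => x; rewrite !inE => /orP[/eqP->|/orP[/eqP->|xs]].
- by apply: le_trans (ltW lt); apply: hm; rewrite inE eqxx.
- done.
- by apply: le_trans (ltW lt); apply: hm; rewrite inE xs orbT.
Qed.
End Ineq.
Section Q.
Variable C : numClosedFieldType.
Variables R k : nat.
Hypothesis hR : (0 < R)%N.
Hypothesis hk : (0 < k)%N.

Lemma pairsum (I J : finType) (G : I * J -> C) :
  \sum_p G p = \sum_i \sum_j G (i, j).
Proof. by rewrite pair_bigA; apply: eq_bigr => -[]. Qed.

Lemma sumReg (F : Reg R k -> C) :
  \sum_z F z = \sum_v \sum_c \sum_w \sum_d F (v, c, w, d).
Proof.
rewrite pairsum pairsum pairsum.
by [].
Qed.

Lemma inner_push f (phi psi : vec C R k) :
  inner (push f phi) psi = inner phi (fun z => psi (f z)).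
Proof.
rewrite /inner /push.
rewrite [RHS](partition_big f xpredT) //=; apply: eq_bigr => z _.
rewrite rmorph_sum /= mulr_suml; apply: eq_bigr => b /eqP <-.
done.
Qed.

End Q.
Section Q2.
Variable C : numClosedFieldType.
Variables R k : nat.
Hypothesis hR : (0 < R)%N.
Hypothesis hk : (0 < k)%N.

Lemma addmod0 n (x0 x : 'I_n) : val x0 = 0%N -> addmod x0 x = x.
Proof. by move=> h; apply: val_inj; rewrite /= h add0n modn_small. Qed.

Lemma inner_plus (psi : vec C R k) :
  inner (plus' C (R:=R) (k:=k)) psi = ((sqrtC (R * k)%:R)^-1)^* * \sum_v \sum_c psi (v, c, v, c).
Proof.
rewrite /plus' !inner_push /inner sumReg mulr_sumr; apply: eq_bigr => v _.
rewrite mulr_sumr; apply: eq_bigr => c _.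
rewrite (bigD1 (Ordinal hR)) //= [X in _ + X]big1 ?addr0; last first.
  move=> w hw; have -> : (val w == 0%N) = false.
    by apply/negbTE; move: hw; apply: contra => /eqP h; apply/eqP/val_inj.
  by rewrite big1 // => d _; rewrite mulr0 mul0r conjC0 mul0r.
rewrite (bigD1 (Ordinal hk)) //= [X in _ + X]big1 ?addr0; last first.
  move=> d hd; have -> : (val d == 0%N) = false.
    by apply/negbTE; move: hd; apply: contra => /eqP h; apply/eqP/val_inj.
  by rewrite mulr0 conjC0 mul0r.
by rewrite !addmod0 // !mulr1.
Qed.

Definition chi_of (cv : 'I_R -> 'I_k) : vec C R k :=
  fun z => \sum_(v : 'I_R) (sqrtC R%:R)^-1 * (z == (v, cv v, v, cv v))%:R.

Lemma inner_chi cv (psi : vec C R k) :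
  inner (chi_of cv) psi = ((sqrtC R%:R)^-1)^* * \sum_v psi (v, cv v, v, cv v).
Proof.
rewrite /inner /chi_of.
under eq_bigr do rewrite rmorph_sum /= mulr_suml.
rewrite exchange_big mulr_sumr /=; apply: eq_bigr => v _.
rewrite (bigD1 (v, cv v, v, cv v)) //= big1 ?addr0; last first.
  by move=> z hz; rewrite (negbTE hz) mulr0 conjC0 mul0r.
by rewrite eqxx mulr1.
Qed.
End Q2.

Section Core.
Variable C : numClosedFieldType.
Variables R k : nat.
Variable psi : vec C R k.

Definition N (z : Reg R k) : C := `|psi z| ^+ 2.
Definition a u c : C := psi (u, c, u, c).
Definition X (u : 'I_R) (c d : 'I_k) : C := \sum_v N (v, c, u, d).
Definition Y (u : 'I_R) (c : 'I_k) : C := \sum_(v | v != u) N (v, c, u, c).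

Lemma N_ge0 z : 0 <= N z. Proof. exact: exprn_ge0. Qed.
Lemma X_ge0 u c d : 0 <= X u c d. Proof. by apply: sumr_ge0 => v _; apply: N_ge0. Qed.
Lemma Y_ge0 u c : 0 <= Y u c. Proof. by apply: sumr_ge0 => v _; apply: N_ge0. Qed.

Lemma rho_diag x : rhoBC psi x x = \sum_v N (v, x.1.1, x.1.2, x.2).
Proof. by apply: eq_bigr => v _; rewrite /N normCK. Qed.

Lemma normM_le (p q : C) : `|p| * `|q| <= (`|p| ^+ 2 + `|q| ^+ 2) / 2%:R.
Proof. by apply: Order.le_of_leif; apply: real_leif_mean_square; apply: normr_real. Qed.

Lemma stepA : separableBC (rhoBC psi) -> forall u c c', c != c' ->
  `|a u c| * `|a u c'| <= (X u c c' + X u c' c) / 2%:R + (Y u c + Y u c') / 2%:R.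
Proof.
case=> n [p [sB [sC [p0 p1 sBd sCd hrho]]]] u c c' cc.
set x := ((c, u), c) : (TB R k * 'I_k)%type.
set y := ((c', u), c') : (TB R k * 'I_k)%type.
have e : rhoBC psi x y = a u c * (a u c')^* +
    \sum_(v | v != u) psi (v, c, u, c) * (psi (v, c', u, c'))^*.
  by rewrite /rhoBC (bigD1 u).
have -> : `|a u c| * `|a u c'| = `|rhoBC psi x y - \sum_(v | v != u) psi (v, c, u, c) * (psi (v, c', u, c'))^*|.
  by rewrite e addrK normrM norm_conjC.
apply: (le_trans (ler_normB _ _)); apply: lerD.
  rewrite hrho; apply: (le_trans (ler_norm_sum _ _ _)).
  have -> : (X u c c' + X u c' c) / 2%:R =
      (\sum_i p i * (sB i (c, u) (c, u) * sC i c' c' + sB i (c', u) (c', u) * sC i c c)) / 2%:R.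
    congr (_ / _).
    rewrite -[X u c c'](rho_diag ((c, u), c')) -[X u c' c](rho_diag ((c', u), c)).
    by rewrite !hrho -big_split /=; apply: eq_bigr => i _; rewrite mulrDr.
  rewrite mulr_suml; apply: ler_sum => i _; rewrite -mulrA.
  rewrite normrM (ger0_norm (p0 i)); apply: ler_wpM2l => //.
  rewrite normrM; have [psB _] := sBd i; have [psC _] := sCd i.
  have cu : (c, u) != (c', u) by rewrite xpair_eqE negb_and cc.
  rewrite /x /y /=.
  apply: (@prod_bound C _ _ (sB i (c,u) (c,u)) (sB i (c',u) (c',u)) (sC i c c) (sC i c' c'));
    rewrite ?normr_ge0 ?psd_diag //.
  - exact: psd_minor.
  - exact: psd_minor.
apply: (le_trans (ler_norm_sum _ _ _)).
rewrite /Y -big_split /= mulr_suml.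
apply: ler_sum => v _; rewrite normrM norm_conjC; exact: normM_le.
Qed.
End Core.

Section Core2.
Variable C : numClosedFieldType.
Variables R k : nat.
Variable psi : vec C R k.

Local Notation N := (@N C R k psi).
Local Notation a := (@a C R k psi).
Local Notation X := (@X C R k psi).
Local Notation Y := (@Y C R k psi).

Definition matchb (z : Reg R k) := (z.1.1.1 == z.1.2) && (z.1.1.2 == z.2).
Definition D u := \sum_c \sum_(c' | c' != c) `|a u c| * `|a u c'|.

Lemma sumReg' (F : Reg R k -> C) :
  \sum_z F z = \sum_w \sum_c \sum_d \sum_v F (v, c, w, d).
Proof.
rewrite sumReg exchange_big /=.
under eq_bigr do rewrite exchange_big /=.
under eq_bigr do under eq_bigr do rewrite exchange_big /=.
by rewrite exchange_big.
Qed.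

Lemma mis_split :
  \sum_(z | ~~ matchb z) N z =
  \sum_u \sum_c \sum_(d | d != c) X u c d + \sum_u \sum_c Y u c.
Proof.
rewrite big_mkcond sumReg' -big_split /=; apply: eq_bigr => u _.
rewrite -big_split /=; apply: eq_bigr => c _.
rewrite (bigD1 c) //= addrC; congr (_ + _).
  apply: eq_bigr => d dc; apply: eq_bigr => v _.
  by rewrite /matchb /= (eq_sym c d) (negbTE dc) andbF.
rewrite /Y [RHS]big_mkcond; apply: eq_bigr => v _.
by rewrite /matchb /= eqxx andbT.
Qed.

Lemma swap_sum (G : 'I_k -> 'I_k -> C) :
  \sum_c \sum_(c' | c' != c) G c' c = \sum_c \sum_(c' | c' != c) G c c'.
Proof.
under eq_bigr do rewrite big_mkcond.
rewrite exchange_big /=; apply: eq_bigr => c _.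
by rewrite [RHS]big_mkcond; apply: eq_bigr => c' _; rewrite eq_sym.
Qed.

Lemma symavg (G : 'I_k -> 'I_k -> C) :
  \sum_c \sum_(c' | c' != c) (G c c' + G c' c) / 2%:R = \sum_c \sum_(c' | c' != c) G c c'.
Proof.
transitivity ((\sum_c \sum_(c' | c' != c) G c c' + \sum_c \sum_(c' | c' != c) G c' c) / 2%:R).
  rewrite mulrDl !mulr_suml -big_split; apply: eq_bigr => c _.
  rewrite !mulr_suml -big_split; apply: eq_bigr => c' _; by rewrite mulrDl.
have two : (2%:R : C) != 0 by rewrite pnatr_eq0.
by rewrite swap_sum; field.
Qed.

Lemma stepB : (0 < k)%N -> separableBC (rhoBC psi) ->
  \sum_u D u <= k%:R * \sum_(z | ~~ matchb z) N z.
Proof.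
move=> hk sep; rewrite mis_split.
set MX := (\sum_u \sum_c \sum_(d | d != c) X u c d); set MY := (\sum_u \sum_c Y u c).
have MX0 : 0 <= MX by do 3 (apply: sumr_ge0 => ? _); apply: X_ge0.
have MY0 : 0 <= MY by do 2 (apply: sumr_ge0 => ? _); apply: Y_ge0.
apply: (le_trans (y := MX + k%:R * MY)); last first.
  rewrite mulrDr lerD2r; apply: ler_peMl => //.
  by rewrite ler1n.
rewrite /MX /MY mulr_sumr -big_split; apply: ler_sum => u _.
apply: (le_trans (y := \sum_c \sum_(c' | c' != c)
   ((X u c c' + X u c' c) / 2%:R + (Y u c + Y u c') / 2%:R))).
  apply: ler_sum => c _; apply: ler_sum => c' cc; apply: (@stepA C R k psi sep u c c'); by rewrite eq_sym.
under eq_bigr do rewrite big_split /=.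
rewrite big_split /= symavg lerD2l.
rewrite (symavg (fun c c' => Y u c)) mulr_sumr; apply: ler_sum => c _.
apply: (le_trans (y := \sum_c' Y u c)).
  rewrite [X in _ <= X](bigID (fun c' => c' != c)) /= lerDl.
  by apply: sumr_ge0 => ? _; apply: Y_ge0.
rewrite sumr_const (_ : #|_| = k) ?mulr_natl //.
by rewrite -[RHS]card_ord; apply: eq_card.
Qed.
End Core2.

Section StepC.
Variable C : numClosedFieldType.
Variable k : nat.
Variable f : 'I_k -> C.
Hypothesis f0 : forall c, 0 <= f c.

Definition DD := \sum_c \sum_(c' | c' != c) f c * f c'.

Lemma DD_ge0 : 0 <= DD.
Proof. by apply: sumr_ge0 => c _; apply: sumr_ge0 => c' _; apply: mulr_ge0. Qed.

Lemma sqr_sum : (\sum_c f c) ^+ 2 = \sum_c f c ^+ 2 + DD.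
Proof.
rewrite expr2 mulr_suml /DD -big_split /=; apply: eq_bigr => c _.
by rewrite mulr_sumr (bigD1 c) //= expr2.
Qed.

Lemma off_sqr m : (forall c, f c <= f m) -> (\sum_(c | c != m) f c) ^+ 2 <= DD.
Proof.
move=> fm.
rewrite expr2 mulr_suml.
apply: (le_trans (y := \sum_(c | c != m) \sum_(c' | c' != c) f c * f c')).
  apply: ler_sum => c cm; rewrite mulr_sumr.
  rewrite [X in X <= _](bigD1 c) //= [X in _ <= X](bigD1 m) 1?eq_sym //=.
  have e3 : \sum_(c' | (c' != m) && (c' != c)) f c * f c' = \sum_(c' | (c' != c) && (c' != m)) f c * f c'.
    by apply: eq_bigl => c'; rewrite andbC.
  rewrite e3 lerD2r; apply: ler_wpM2l => //.
rewrite /DD [X in _ <= X](bigD1 m) //= lerDr.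
by apply: sumr_ge0 => c' _; apply: mulr_ge0.
Qed.
End StepC.

Section Final.
Variable C : numClosedFieldType.

Lemma le_sum1 (I : finType) (F : I -> C) i : (forall j, 0 <= F j) -> F i <= \sum_j F j.
Proof. by move=> h; rewrite (bigD1 i) //= lerDl sumr_ge0. Qed.

Lemma sq_lb (s e t : C) : 0 <= s -> 0 <= e -> 0 <= t -> s - e <= t ->
  s ^+ 2 - (s * e) *+ 2 <= t ^+ 2.
Proof.
move=> s0 e0 t0 h.
have := real_leVge (ger0_real s0) (ger0_real e0); case/orP => se.
  apply: (le_trans (y := 0)); last exact: exprn_ge0.
  have -> : s ^+ 2 - (s * e) *+ 2 = s * (s - e *+ 2) by rewrite mulrBr mulrnAr expr2.
  apply: mulr_ge0_le0 => //; rewrite subr_le0 mulr2n; apply: (le_trans se); by rewrite lerDl.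
have h0 : 0 <= s - e by rewrite subr_ge0.
apply: (le_trans (y := (s - e) ^+ 2)).
  by rewrite sqrrB lerDl exprn_ge0.
by rewrite ler_pXn2r // nnegrE.
Qed.

Lemma norm_sc (n : nat) (x : C) :
  `|((sqrtC n%:R)^-1)^* * x| ^+ 2 = `|x| ^+ 2 / n%:R.
Proof.
have h : `|sqrtC (n%:R : C)| = sqrtC n%:R by rewrite ger0_norm // sqrtC_ge0 ler0n.
by rewrite normrM norm_conjC normfV h exprMn exprVn sqrtCK mulrC.
Qed.
End Final.

Arguments matchb {R k}.
Arguments N {C R k}.
Arguments D {C R k}.
Arguments a {C R k}.
Arguments stepB {C R k psi}.

Lemma nat_ineq (C : numClosedFieldType) (k : nat) :
  4%:R * k%:R * (1 + k%:R) <= k.+1%:R ^+ 3 :> C.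
Proof.
rewrite -natrX -[1 + _](natrD C 1 k) -!natrM ler_nat.
have h : (4 * k <= k.+1 ^ 2)%N.
  case: k => [|j] //; rewrite !expnS expn0; nia.
by rewrite add1n expnS [X in (X <= _)%N]mulnC leq_mul2l h orbT.
Qed.

Theorem claim4p6 (C : numClosedFieldType) (R k : nat) (hR : (0 < R)%N) (hk : (0 < k)%N)
  (psi : vec C R k) (dD dM : C) :
  is_state psi ->
  separableBC (rhoBC psi) ->
  probDensity psi = k%:R^-1 - dD ->
  probMatchCheck psi = 1 - dM ->
  exists chi : vec C R k,
    rigid chi /\
    1 - k%:R * dD - k.+1%:R * sqrtC (k.+1%:R * dM) <= `|inner chi psi| ^+ 2.
Proof.
move=> hst hsep hD hM.
pose f u c := `|a psi u c|.
have f0 : forall u c, 0 <= f u c by move=> u c; exact: normr_ge0.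
have hmax : forall u, exists m, [forall c, f u c <= f u m].
  move=> u; have [m hm] := @exists_max C _ (f u) (Ordinal hk) (fun c => normr_real _).
  by exists m; apply/forallP.
pose cv u := xchoose (hmax u).
have cvP : forall u c, f u c <= f u (cv u).
  by move=> u c; have /forallP := xchooseP (hmax u); apply.
exists (@chi_of C R k cv); split; first by exists cv.
rewrite inner_chi norm_sc.
rewrite /probDensity (@inner_plus C R k hR hk psi) norm_sc in hD.
set Ssum := \sum_v \sum_c psi (v, c, v, c) in hD *.
set Tsum := \sum_v psi (v, cv v, v, cv v).
have e1 : probMatchCheck psi = \sum_(z | matchb z) N psi z by [].
have htot : \sum_(z | matchb z) N psi z + \sum_(z | ~~ matchb z) N psi z = 1.
  by rewrite -hst [RHS](bigID matchb) /=.
have hmis : dM = \sum_(z | ~~ matchb z) N psi z.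
  have -> : dM = 1 - probMatchCheck psi by rewrite hM opprB addrC subrK.
  by rewrite e1; apply/eqP; rewrite subr_eq addrC htot.
have dM0 : 0 <= dM by rewrite hmis; apply: sumr_ge0 => z _; exact: N_ge0.
have dM1 : dM <= 1.
  rewrite hmis -htot lerDr; apply: sumr_ge0 => z _; exact: N_ge0.
have hW : \sum_u D psi u <= k%:R * dM by rewrite hmis; exact: stepB.
have hR0 : (0 : C) <= R%:R by exact: ler0n.
have hdiag : \sum_u \sum_c f u c ^+ 2 <= 1.
  rewrite -hst sumReg; apply: ler_sum => u _; apply: ler_sum => c _.
  apply: (le_trans (y := \sum_d N psi (u, c, u, d))).
    by apply: (@le_sum1 C _ (fun d => N psi (u, c, u, d))) => d; exact: N_ge0.
  apply: (@le_sum1 C _ (fun w => \sum_d N psi (u, c, w, d))) => w.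
  by apply: sumr_ge0 => d _; exact: N_ge0.
have hA : (\sum_u \sum_c f u c) ^+ 2 <= R%:R * (1 + k%:R * dM).
  have hr : forall u, (\sum_c f u c) \is Num.real.
    by move=> u; apply: ger0_real; apply: sumr_ge0.
  apply: (le_trans (@cs_sum C _ _ hr)).
  rewrite card_ord; apply: ler_wpM2l => //.
  have -> : \sum_u (\sum_c f u c) ^+ 2 = \sum_u \sum_c f u c ^+ 2 + \sum_u D psi u.
    by rewrite -big_split; apply: eq_bigr => u _; rewrite (@sqr_sum C k (f u)).
  exact: lerD.
have hE : (\sum_u \sum_(c | c != cv u) f u c) ^+ 2 <= R%:R * (k%:R * dM).
  have hr : forall u, (\sum_(c | c != cv u) f u c) \is Num.real.
    by move=> u; apply: ger0_real; apply: sumr_ge0.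
  apply: (le_trans (@cs_sum C _ _ hr)).
  rewrite card_ord; apply: ler_wpM2l => //.
  apply: le_trans hW; apply: ler_sum => u _.
  exact: (@off_sqr C k (f u) (f0 u) (cv u) (cvP u)).
have hs : `|Ssum| <= \sum_u \sum_c f u c.
  apply: (le_trans (ler_norm_sum _ _ _)); apply: ler_sum => u _; exact: ler_norm_sum.
have he : `|Ssum - Tsum| <= \sum_u \sum_(c | c != cv u) f u c.
  have -> : Ssum - Tsum = \sum_u \sum_(c | c != cv u) psi (u, c, u, c).
    rewrite /Ssum /Tsum -sumrB; apply: eq_bigr => u _.
    by rewrite (bigD1 (cv u)) //= addrC addrK.
  apply: (le_trans (ler_norm_sum _ _ _)); apply: ler_sum => u _; exact: ler_norm_sum.
have hst' := lerB_dist Ssum (Ssum - Tsum); rewrite subKr in hst'.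
set s := `|Ssum| in hD hs hst' *; set e := `|Ssum - Tsum| in he hst' *; set t := `|Tsum| in hst' *.
have s0 : 0 <= s by exact: normr_ge0.
have e0 : 0 <= e by exact: normr_ge0.
have t0 : 0 <= t by exact: normr_ge0.
have hs2 : s ^+ 2 <= R%:R * (1 + k%:R * dM).
  apply: le_trans hA; rewrite ler_pXn2r // nnegrE //.
  by apply: sumr_ge0 => u _; apply: sumr_ge0.
have he2 : e ^+ 2 <= R%:R * (k%:R * dM).
  apply: le_trans hE; rewrite ler_pXn2r // nnegrE //.
  by apply: sumr_ge0 => u _; apply: sumr_ge0.
set sq := sqrtC (k.+1%:R * dM).
have sq0 : 0 <= sq by rewrite sqrtC_ge0 mulr_ge0 ?ler0n.
have key : (s * e) *+ 2 <= R%:R * k.+1%:R * sq.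
  rewrite -(ler_pXn2r (n := 2)) // ?nnegrE ?mulrn_wge0 ?mulr_ge0 ?ler0n //.
  have -> : ((s * e) *+ 2) ^+ 2 = 4%:R * (s ^+ 2 * e ^+ 2) by ring.
  have -> : (R%:R * k.+1%:R * sq) ^+ 2 = R%:R ^+ 2 * dM * k.+1%:R ^+ 3.
    rewrite !exprMn sqrtCK; ring.
  apply: (le_trans (y := 4%:R * ((R%:R * (1 + k%:R * dM)) * (R%:R * (k%:R * dM))))).
    apply: ler_wpM2l; first exact: ler0n.
    by apply: ler_pM; rewrite ?exprn_ge0.
  have -> : 4%:R * ((R%:R * (1 + k%:R * dM)) * (R%:R * (k%:R * dM))) =
      R%:R ^+ 2 * dM * (4%:R * k%:R * (1 + k%:R * dM)) by ring.
  apply: ler_wpM2l; first by rewrite mulr_ge0 ?exprn_ge0.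
  apply: le_trans (nat_ineq C k).
  apply: ler_wpM2l; first by rewrite mulr_ge0 ?ler0n.
  rewrite lerD2l -[X in _ <= X]mulr1; apply: ler_wpM2l => //; exact: ler0n.
have kn0 : (k%:R : C) != 0 by rewrite pnatr_eq0 -lt0n.
have Rn0 : (R%:R : C) != 0 by rewrite pnatr_eq0 -lt0n.
have hkd : k%:R * dD = 1 - s ^+ 2 / R%:R.
  have -> : dD = k%:R^-1 - s ^+ 2 / (R * k)%:R by rewrite hD opprB addrC subrK.
  by rewrite natrM; field; rewrite Rn0 kn0.
rewrite hkd subKr.
apply: (le_trans (y := (s ^+ 2 - (s * e) *+ 2) / R%:R)); last first.
  apply: ler_wpM2r; first by rewrite invr_ge0 ler0n.
  exact: sq_lb.
rewrite mulrBl lerD2l lerN2 ler_pdivrMr ?ltr0n //.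
have -> : k.+1%:R * sq * R%:R = R%:R * k.+1%:R * sq by ring.
exact: key.
Qed.
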